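(* Let $R$ be a finite commutative local ring and $G=\mathrm{GL}_n(R)$. For all $r,t\in W$ with $\ell(t)\le\ell(r)$ and $t\neq r$, one has $ULV\cap t^{-1}Ur=\emptyset$.
   Context: $L$ is the subgroup of diagonal matrices, $U$ the upper unitriangular and $V$ the lower unitriangular matrices in $G$. $W\cong S_n$ is the group of permutation matrices in $G$, and $\ell$ is the word length on $W$ with respect to the generating set of simple transpositions $\{(1\,2),(2\,3),\ldots,(n-1\,n)\}$. $ULV$ denotes the set of products $ulv$ and $t^{-1}Ur$ the set of products $t^{-1}ur$. *)

(* Defs.v *)
From HB Require Import structures.
From mathcomp Require Import all_boot all_order all_algebra all_fingroup.
Set Implicit Arguments. Unset Strict Implicit. Unset Printing Implicit Defensive.
Import GRing.Theory.
Local Open Scope ring_scope.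

(* A (commutative, nontrivial) ring is local iff its non-units form an ideal;
   for the additive closure (the only non-automatic part): the sum of two
   non-units is a non-unit. *)
Definition local_ring (R : comUnitRingType) : Prop :=
  forall x y : R, x \notin GRing.unit -> y \notin GRing.unit ->
    x + y \notin GRing.unit.

Definition upper_unitri (R : comUnitRingType) n (A : 'M[R]_n) : Prop :=
  (forall i, A i i = 1) /\ (forall i j : 'I_n, (j < i)%N -> A i j = 0).

Definition lower_unitri (R : comUnitRingType) n (A : 'M[R]_n) : Prop :=
  (forall i, A i i = 1) /\ (forall i j : 'I_n, (i < j)%N -> A i j = 0).

Definition diag_inv (R : comUnitRingType) n (A : 'M[R]_n) : Prop :=
  is_diag_mx A /\ A \in unitmx.

Definition simple_word n (s : 'S_n) (w : seq ('I_n * 'I_n)) : Prop :=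
  all (fun p : 'I_n * 'I_n => (p.2 == p.1.+1 :> nat)) w /\
  s = (\prod_(p <- w) tperm p.1 p.2)%g.

Definition has_word_of_length n (s : 'S_n) (k : nat) : Prop :=
  exists w, simple_word s w /\ size w = k.

Definition perm_length n (s : 'S_n) (k : nat) : Prop :=
  has_word_of_length s k /\ forall m, has_word_of_length s m -> (k <= m)%N.

(* Main.v *)
Require Import Defs.
From HB Require Import structures.
From mathcomp Require Import all_boot all_order all_algebra all_fingroup.
From mathcomp Require Import zify.
Import GRing.Theory.
Set Implicit Arguments. Unset Strict Implicit.
Section Comb.
Variable n : nat.
Implicit Types s x y : 'S_n.

Definition invs s : {set 'I_n * 'I_n} :=
  [set p : 'I_n * 'I_n | (p.1 < p.2)%N && (s p.2 < s p.1)%N].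
Definition pinv s := #|invs s|.
Definition cnt s (k v : nat) := #|[set i : 'I_n | (k <= i)%N && (s i <= v)%N]|.

Lemma oeq (i j : 'I_n) : (i == j) = (nat_of_ord i == nat_of_ord j).
Proof. by []. Qed.

Lemma ne_val (i j : 'I_n) : i <> j -> nat_of_ord i <> nat_of_ord j.
Proof. by move=> h e; apply: h; apply: val_inj. Qed.

Lemma tperm_lt (a b i j : 'I_n) : nat_of_ord b = a.+1 ->
  (tperm a b i < tperm a b j)%N =
  (((i < j)%N && ~~((i == a) && (j == b))) || ((i == b) && (j == a))).
Proof.
move=> hb; rewrite !oeq.
case: tpermP => [e1|e1|/ne_val n1 /ne_val n2]; case: tpermP => [e2|e2|/ne_val n3 /ne_val n4];
  (repeat match goal with H : ?x = _ |- _ => subst x end); lia.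
Qed.

Lemma tperm_le (a b i : 'I_n) (m : nat) : nat_of_ord b = a.+1 -> m != a.+1 ->
  (m <= tperm a b i)%N = (m <= i)%N.
Proof.
move=> hb hm; case: tpermP => [e|e|//]; rewrite e; lia.
Qed.

Lemma inv_desc s (a b : 'I_n) : nat_of_ord b = a.+1 -> (s b < s a)%N ->
  (pinv (tperm a b * s)%g).+1 = pinv s.
Proof.
move=> hb hd.
pose f := fun p : 'I_n * 'I_n => (tperm a b p.1, tperm a b p.2).
have finj : injective f.
  by move=> [i j] [i' j'] /= [/(can_inj (tpermK a b)) -> /(can_inj (tpermK a b)) ->].
have E : invs (tperm a b * s)%g =
   f @^-1: [set p : 'I_n * 'I_n | (tperm a b p.1 < tperm a b p.2)%N && (s p.2 < s p.1)%N].
  apply/setP => -[i j]; rewrite !inE /= !tpermK !permM.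
  by [].
rewrite /pinv E card_preimset //.
have -> : [set p : 'I_n * 'I_n | (tperm a b p.1 < tperm a b p.2)%N && (s p.2 < s p.1)%N]
   = invs s :\ (a, b).
  apply/setP => -[i j]; rewrite !inE /= tperm_lt // xpair_eqE.
  have ab : (a == b) = false by rewrite oeq hb; lia.
  have ba : (b == a) = false by rewrite oeq hb; lia.
  case: (i =P a) => [->|]; case: (j =P b) => [->|] //=;
    rewrite ?ab ?ba ?andbF ?andbT ?orbF //= => *.
  case: (i =P b) => [->|_]; case: (j =P a) => [->|_] //=; rewrite ?andbF ?orbF //.
  have -> : (s a < s b)%N = false by rewrite ltnNge ltnW.
  by rewrite !andbF.
rewrite [RHS](cardsD1 (a, b)) inE /= hb leqnn hd.
by [].
Qed.


Lemma inv_asc s (a b : 'I_n) : nat_of_ord b = a.+1 -> (s a < s b)%N ->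
  pinv (tperm a b * s)%g = (pinv s).+1.
Proof.
move=> hb ha.
have := @inv_desc (tperm a b * s)%g a b hb; rewrite !permM !tpermL tpermR.
by rewrite mulgA tperm2 mul1g => ->.
Qed.

Lemma inv_step s (a b : 'I_n) : nat_of_ord b = a.+1 ->
  (pinv (tperm a b * s)%g <= (pinv s).+1)%N.
Proof.
move=> hb; case: (ltngtP (s a) (s b)) => h.
- by rewrite inv_asc.
- by rewrite -(inv_desc hb h) leqW.
- by have := perm_inj (val_inj h); move/(congr1 (@nat_of_ord n)); rewrite hb; lia.
Qed.

Lemma inv_word s w : simple_word s w -> (pinv s <= size w)%N.
Proof.
elim: w s => [|p w IH] s [hall ->].
  rewrite big_nil /pinv (_ : invs 1 = set0) ?cards0 //.
  by apply/setP => -[i j]; rewrite !inE /= !perm1; apply/negbTE; lia.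
rewrite big_cons /=; move: hall => /= /andP [/eqP hp hall].
apply: leq_trans (inv_step _ hp) _; rewrite ltnS; exact: IH.
Qed.

Lemma ge_id s : (forall i : 'I_n, (i <= s i)%N) -> s = 1%g.
Proof.
move=> hs; apply/permP => i; rewrite perm1; apply/val_inj/eqP; rewrite eqn_leq hs andbT.
rewrite leqNgt; apply/negP => hlt.
have E : (\sum_(j : 'I_n) (s j : nat) = \sum_(j : 'I_n) (j : nat))%N.
  by rewrite [RHS](reindex_inj (@perm_inj _ s)).
move: E; rewrite (bigD1 i) //= [X in _ = X](bigD1 i) //=.
have : (\sum_(j | j != i) (j : nat) <= \sum_(j | j != i) (s j : nat))%N.
  by apply: leq_sum => j _.
move=> h1 h2; have := leq_add hlt h1; by rewrite h2 addSn ltnn.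
Qed.

Lemma no_desc_id s : (forall a b : 'I_n, nat_of_ord b = a.+1 -> (s a < s b)%N) -> s = 1%g.
Proof.
move=> hs; apply: ge_id.
suff H : forall k (i : 'I_n), nat_of_ord i = k -> (k <= s i)%N by move=> i; exact: H.
elim=> [//|k IH] i hi.
have hk : (k < n)%N by rewrite -ltnS -hi ltnS ltnW.
have := hs (Ordinal hk) i hi; have := IH (Ordinal hk) erefl; lia.
Qed.

Lemma word_exists s : exists w, simple_word s w /\ size w = pinv s.
Proof.
move: {2}(pinv s) (erefl (pinv s)) => m; elim/ltn_ind: m s => m IH s hm.
case: (boolP [exists a : 'I_n, exists b : 'I_n, (nat_of_ord b == a.+1) && (s b < s a)%N]).
  move=> /existsP [a /existsP [b /andP [/eqP hb hd]]].
  have h1 := inv_desc hb hd.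
  have [|w [[hall hw] hsz]] := IH (pinv (tperm a b * s)%g) _ (tperm a b * s)%g erefl.
    by rewrite -hm -h1.
  exists ((a, b) :: w); split; last by rewrite /= hsz h1.
  split; first by rewrite /= hb eqxx.
  by rewrite big_cons /= -hw mulgA tperm2 mul1g.
rewrite negb_exists => /forallP hn.
have -> : s = 1%g.
  apply: no_desc_id => a b hb.
  have := hn a; rewrite negb_exists => /forallP /(_ b); rewrite hb eqxx /= -leqNgt.
  rewrite leq_eqVlt => /orP [/eqP/val_inj/perm_inj e|//].
  by move: hb; rewrite e; lia.
exists [::]; split; first by split => //; rewrite big_nil.
rewrite /pinv (_ : invs 1 = set0) ?cards0 //.
by apply/setP => -[i j]; rewrite !inE /= !perm1; apply/negbTE; lia.
Qed.

Lemma inv_leV s : (pinv s <= pinv s^-1)%N.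
Proof.
pose g := fun p : 'I_n * 'I_n => (s p.2, s p.1).
have ginj : injective g.
  by move=> [i j] [i' j'] /= [/perm_inj -> /perm_inj ->].
rewrite /pinv -(card_imset _ ginj); apply: subset_leq_card.
apply/subsetP => q /imsetP [[i j]]; rewrite !inE /= => /andP [h1 h2] ->.
by rewrite /= !permK h1 h2.
Qed.

Lemma invV s : pinv s^-1 = pinv s.
Proof. by apply/eqP; rewrite eqn_leq inv_leV -{2}(invgK s) inv_leV. Qed.

Lemma cnt_rec s (m : 'I_n) v : cnt s m v = ((s m <= v)%N + cnt s m.+1 v)%N.
Proof.
rewrite /cnt (cardsD1 m) inE leqnn /=; congr (_ + _)%N.
apply: eq_card => i; rewrite !inE oeq; case: (ltngtP m i) => h /=; lia.
Qed.

Lemma cnt_swap s (a b : 'I_n) (m v : nat) : nat_of_ord b = a.+1 -> m != a.+1 ->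
  cnt (tperm a b * s)%g m v = cnt s m v.
Proof.
move=> hb hm; rewrite /cnt -[RHS](card_preimset _ (@perm_inj _ (tperm a b))).
by apply: eq_card => i; rewrite !inE permM tperm_le.
Qed.

Lemma ar1 (xa xb ya yb : bool) (cx cy : nat) : (xa -> xb) -> (ya -> yb) ->
  (cy <= cx)%N -> (yb + cy <= xb + cx)%N -> (ya + yb + cy <= xa + xb + cx)%N ->
  (ya + cy <= xa + cx)%N.
Proof. by case: xa; case: xb; case: ya; case: yb => //= *; lia. Qed.

Lemma ar2 (xa xb ya yb : bool) (cx cy : nat) : (xa -> xb) -> (yb -> ya) ->
  (cy <= cx)%N -> (yb + cy <= xb + cx)%N -> (ya + yb + cy <= xa + xb + cx)%N ->
  (yb + cy <= xa + cx)%N.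
Proof. by case: xa; case: xb; case: ya; case: yb => //= *; lia. Qed.

Lemma bruhat x y : (forall k v, cnt y k v <= cnt x k v)%N -> y = x \/ (pinv y < pinv x)%N.
Proof.
move: {2}(pinv x) (erefl (pinv x)) => m; elim/ltn_ind: m x y => m IH x y hm H.
case: (boolP [exists a : 'I_n, exists b : 'I_n, (nat_of_ord b == a.+1) && (x b < x a)%N]).
  move=> /existsP [a /existsP [b /andP [/eqP hb hd]]].
  have h1 := inv_desc hb hd.
  have key : forall s v, cnt s a v = ((s a <= v)%N + (s b <= v)%N + cnt s b.+1 v)%N.
    by move=> s v; rewrite (cnt_rec s a) -hb (cnt_rec s b) addnA.
  have xb' : forall s v, cnt (tperm a b * s)%g b v = ((s a <= v)%N + cnt s b.+1 v)%N.
    move=> s v; rewrite cnt_rec permM tpermR cnt_swap //; rewrite hb; lia.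
  have Hx : forall v, (x a <= v)%N -> (x b <= v)%N by move=> v h; exact: leq_trans (ltnW hd) h.
  have Ha := H a; have Hb := H b; have Hb1 := H b.+1.
  case: (ltngtP (y a) (y b)) => hy.
  - have Hy : forall k v, (cnt y k v <= cnt (tperm a b * x)%g k v)%N.
      move=> k v; case: (k =P a.+1) => [->|/eqP hk]; last by rewrite cnt_swap //; exact: H.
      rewrite -hb xb' cnt_rec.
      apply: ar2 (Hx v) _ (Hb1 v) _ _.
      + by move=> h; exact: leq_trans (ltnW hy) h.
      + by rewrite -(cnt_rec y b) -(cnt_rec x b); exact: Hb.
      + by rewrite -(key y) -(key x); exact: Ha.
    have lt1 : (pinv (tperm a b * x)%g < m)%N by rewrite -hm -h1 ltnSn.
    have [e|lt] := IH _ lt1 _ _ erefl Hy.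
    + by right; rewrite e -h1.
    + by right; rewrite -h1 ltnS ltnW.
  - have Hy : forall k v, (cnt (tperm a b * y)%g k v <= cnt (tperm a b * x)%g k v)%N.
      move=> k v; case: (k =P a.+1) => [->|/eqP hk]; last by rewrite !cnt_swap //; exact: H.
      rewrite -hb !xb'.
      apply: ar1 (Hx v) _ (Hb1 v) _ _.
      + by move=> h; exact: leq_trans (ltnW hy) h.
      + by rewrite -(cnt_rec y b) -(cnt_rec x b); exact: Hb.
      + by rewrite -(key y) -(key x); exact: Ha.
    have lt1 : (pinv (tperm a b * x)%g < m)%N by rewrite -hm -h1 ltnSn.
    have [e|lt] := IH _ lt1 _ _ erefl Hy.
    + by left; apply: (mulgI (tperm a b)).
    + by right; rewrite -h1 -(inv_desc hb hy) ltnS.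
  - by have := perm_inj (val_inj hy); move/(congr1 (@nat_of_ord n)); rewrite hb; lia.
rewrite negb_exists => /forallP hn.
have x1 : x = 1%g.
  apply: no_desc_id => a b hb.
  have := hn a; rewrite negb_exists => /forallP /(_ b); rewrite hb eqxx /= -leqNgt.
  rewrite leq_eqVlt => /orP [/eqP/val_inj/perm_inj e|//].
  by move: hb; rewrite e; lia.
left; rewrite x1; apply: ge_id => i; rewrite leqNgt; apply/negP => hlt.
have := H i (y i); rewrite x1.
rewrite (_ : cnt 1%g i (y i) = 0%N).
  by rewrite leqn0 cards_eq0 => /eqP/setP/(_ i); rewrite !inE leqnn leqnn.
apply/eqP; rewrite cards_eq0; apply/eqP/setP => j; rewrite !inE perm1; apply/negbTE; lia.
Qed.

End Comb.

Unset Implicit Arguments.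
Section MxS.
Local Open Scope ring_scope.

Variables (R : comUnitRingType) (n : nat).

Definition Tk (k : nat) (A : 'M[R]_n) : 'M[R]_n :=
  \matrix_(i, j) if (i < k)%N || (j < k)%N then (i == j)%:R else A i j.

Lemma Tk_row (k : nat) (A : 'M[R]_n) (i c : 'I_n) : (i < k)%N -> Tk k A i c = (i == c)%:R.
Proof. by move=> h; rewrite mxE h. Qed.

Lemma Tk_col (k : nat) (A : 'M[R]_n) (c j : 'I_n) : (j < k)%N -> Tk k A c j = (c == j)%:R.
Proof. by move=> h; rewrite mxE h orbT. Qed.

Lemma Tk_mul k (u b : 'M[R]_n) :
  (forall i j : 'I_n, (j < i)%N -> u i j = 0) ->
  (forall i j : 'I_n, (i < j)%N -> b i j = 0) ->
  Tk k (u *m b) = Tk k u *m Tk k b.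
Proof.
move=> hu hb; apply/matrixP => i j; rewrite [LHS]mxE !mxE.
case: (ltnP i k) => hi /=.
  rewrite (bigD1 i) //= big1 => [|c hc]; last by rewrite Tk_row // eq_sym (negbTE hc) mul0r.
  by rewrite Tk_row // eqxx mul1r addr0 mxE hi.
case: (ltnP j k) => hj /=.
  rewrite (bigD1 j) //= big1 => [|c hc]; last by rewrite (Tk_col _ _ _ _ hj) (negbTE hc) mulr0.
  by rewrite !(Tk_col _ _ _ _ hj) eqxx mulr1 addr0.
apply: eq_bigr => c _; rewrite !mxE.
case: (ltnP c k) => hc /=.
  have -> : (i < k)%N = false by apply/negbTE; rewrite -leqNgt.
  rewrite /= hu; last by apply: leq_trans hc hi.
  have -> : (i == c) = false by apply/negbTE; rewrite neq_ltn; apply/orP; right; exact: leq_trans hc hi.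
  by rewrite !mul0r.
have -> : (i < k)%N = false by apply/negbTE; rewrite -leqNgt.
have -> : (j < k)%N = false by apply/negbTE; rewrite -leqNgt.
by [].
Qed.

Lemma det_Tk_upper k (u : 'M[R]_n) : upper_unitri u -> \det (Tk k u) = 1.
Proof.
move=> [hd hl]; rewrite -det_tr det_trig.
  by apply: big1 => i _; rewrite !mxE hd eqxx; case: ifP.
apply/is_trig_mxP => i j hij; rewrite !mxE hl //.
have -> : (j == i) = false by apply/negbTE; rewrite neq_ltn hij orbT.
by case: ifP.
Qed.

Lemma det_Tk_lower k (b : 'M[R]_n) :
  (forall i j : 'I_n, (i < j)%N -> b i j = 0) -> (forall i, b i i \is a GRing.unit) ->
  \det (Tk k b) \is a GRing.unit.
Proof.
move=> hl hd; rewrite det_trig.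
  by apply: unitr_prod => i _; rewrite mxE eqxx; case: ifP => _; rewrite ?unitr1.
apply/is_trig_mxP => i j hij; rewrite !mxE hl //.
have -> : (i == j) = false by apply/negbTE; rewrite neq_ltn hij.
by case: ifP.
Qed.

Definition cntm (s : 'S_n) (k v : nat) := #|[set i : 'I_n | (k <= i)%N && (s i <= v)%N]|.

Lemma det_Tk_zero k v (u' : 'M[R]_n) (x y : 'S_n) :
  (forall i j : 'I_n, (j < i)%N -> u' i j = 0) ->
  (cntm x k v < cntm y k v)%N ->
  \det (Tk k (\matrix_(i, j) u' (x i) (y j))) = 0.
Proof.
move=> hu hc; rewrite /determinant; apply: big1 => s _.
set S := [set j : 'I_n | (k <= j)%N && (y j <= v)%N].
set T := [set i : 'I_n | (k <= i)%N && (x i <= v)%N].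
have : ~~ (s @^-1: S \subset T).
  apply/negP => /subset_leq_card; rewrite card_preimset; last exact: perm_inj.
  by rewrite leqNgt hc.
case/subsetPn => i; rewrite !inE => /andP [hk hy] /negP hx.
rewrite (bigD1 i) //= !mxE.
case: (ltnP i k) => hi /=.
  have -> : (i == s i) = false by apply/negbTE; rewrite neq_ltn; apply/orP; left; exact: leq_trans hi hk.
  by rewrite mul0r mulr0.
have -> : (s i < k)%N = false by apply/negbTE; rewrite -leqNgt.
rewrite hu ?mul0r ?mulr0 //.
case: (leqP (x i) v) => h; first by exfalso; apply: hx; rewrite hi h.
exact: leq_ltn_trans hy h.
Qed.


End MxS.
Arguments Tk {R n} k A.

Unset Implicit Arguments.
Local Open Scope ring_scope.

(* W = { perm_mx s | s : 'S_n }; the length of perm_mx s is that of s. *)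
Theorem proposition3p2 (R : finComUnitRingType) (hR : local_ring R) (n : nat)
    (r t : 'S_n) (lr lt : nat) :
  perm_length r lr -> perm_length t lt -> (lt <= lr)%N ->
  perm_mx t != perm_mx r :> 'M[R]_n ->
  ~ (exists (u l v u' : 'M[R]_n),
       [/\ upper_unitri u, diag_inv l, lower_unitri v, upper_unitri u' &
           u *m l *m v = invmx (perm_mx t) *m u' *m perm_mx r]).
Proof.
move=> [_ hminr] [[wt [hwt hst]] _] hle hne [u [l [v [u' [hu hl hv hu' E]]]]].
have it : (pinv t <= lt)%N by rewrite -hst; exact: inv_word.
have ir : (lr <= pinv r)%N.
  by have [w [hw hs]] := word_exists r; apply: hminr; exists w; split.
have key : forall k vv, (cnt r^-1 k vv <= cnt t^-1 k vv)%N.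
  move=> k vv; rewrite leqNgt; apply/negP => hlt.
  set M := u *m l *m v.
  have hM : M = \matrix_(i, j) u' (t^-1%g i) (r^-1%g j).
    have h1 : perm_mx t *m M = u' *m perm_mx r.
      by rewrite /M E -mulmxA mulKVmx ?unitmx_perm.
    apply/matrixP => i j; rewrite mxE.
    have := congr1 (fun A : 'M[R]_n => A (t^-1%g i) j) h1.
    rewrite -row_permE -{1}(invgK r) -col_permE !mxE permKV => ->.
    by [].
  case: hl => hdl hul.
  pose b := l *m v.
  have lb : forall i j, b i j = l i i * v i j.
    move=> i j; rewrite mxE (bigD1 i) //= big1 ?addr0 // => c hc.
    by rewrite (is_diag_mxP hdl) ?mul0r // eq_sym.
  have lunit : forall i, l i i \is a GRing.unit.
    move=> i; move: hul; rewrite unitmxE det_trig ?is_diag_mx_is_trig //.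
    by rewrite (bigD1 i) //= unitrM => /andP [].
  have hbl : forall i j : 'I_n, (i < j)%N -> b i j = 0.
    by move=> i j hij; rewrite lb hv.2 ?mulr0.
  have hbd : forall i, b i i \is a GRing.unit.
    by move=> i; rewrite lb hv.1 mulr1.
  have hdet : \det (Tk k M) \is a GRing.unit.
    rewrite /M -mulmxA -/b (Tk_mul _ _ k u b hu.2 hbl) det_mulmx det_Tk_upper // mul1r.
    exact: det_Tk_lower.
  by move: hdet; rewrite hM (det_Tk_zero _ _ k vv) ?unitr0 //; exact: hu'.2.
have [e|lt'] := bruhat key.
  move/negP: hne; apply; apply/eqP; congr perm_mx.
  by rewrite -(invgK r) e invgK.
by move: lt'; rewrite !invV; lia.
Qed.
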